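(* Let $A \subseteq \mathbb{C}$ be countable and dense in $\mathbb{C}$. Then there is a transcendental entire function $f$ such that $f^{(s)}(A) \subseteq A$ for all integers $s \geq 0$.
   Context: A transcendental entire function is an entire function $\mathbb{C}\to\mathbb{C}$ that is not a polynomial. $f^{(s)}$ denotes the $s$-th derivative of $f$, with $f^{(0)}=f$. *)

(* Defs.v *)
From Stdlib Require Import Reals.
Open Scope R_scope.

Definition CC : Type := (R * R)%type.
Definition C0 : CC := (0, 0).
Definition Cadd (z w : CC) : CC := (fst z + fst w, snd z + snd w).
Definition Copp (z : CC) : CC := (- fst z, - snd z).
Definition Csub (z w : CC) : CC := Cadd z (Copp w).
Definition Cmul (z w : CC) : CC :=
  (fst z * fst w - snd z * snd w, fst z * snd w + snd z * fst w).
Definition Cnorm (z : CC) : R := sqrt (fst z * fst z + snd z * snd z).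

Fixpoint Cpow (z : CC) (n : nat) : CC :=
  match n with O => (1, 0) | S m => Cmul z (Cpow z m) end.

Fixpoint Csum (f : nat -> CC) (n : nat) : CC :=
  match n with O => f O | S m => Cadd (Csum f m) (f (S m)) end.

Definition is_complex_derivative (f g : CC -> CC) : Prop :=
  forall z : CC, forall eps : R, 0 < eps -> exists delta : R, 0 < delta /\
    forall h : CC, Cnorm h < delta ->
      Cnorm (Csub (Csub (f (Cadd z h)) (f z)) (Cmul (g z) h)) <= eps * Cnorm h.

Definition entire (f : CC -> CC) : Prop := exists g, is_complex_derivative f g.

Definition is_polynomial (f : CC -> CC) : Prop :=
  exists (n : nat) (c : nat -> CC), forall z, f z = Csum (fun k => Cmul (c k) (Cpow z k)) n.

Definition transcendental_entire (f : CC -> CC) : Prop := entire f /\ ~ is_polynomial f.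

(* A is countable: it is the range of some sequence (A nonempty here anyway). *)
Definition countable_set (A : CC -> Prop) : Prop :=
  exists e : nat -> CC, forall z, A z <-> exists n, e n = z.

Definition dense_set (A : CC -> Prop) : Prop :=
  forall z : CC, forall eps : R, 0 < eps -> exists a, A a /\ Cnorm (Csub a z) < eps.

(* Main.v *)
Require Import Defs.
From Stdlib Require Import Reals Lra Lia Psatz List Classical ClassicalEpsilon FunctionalExtensionality Arith ZArith.
Open Scope R_scope.
Import ListNotations.

Ltac cdes := repeat match goal with
  | z : CC |- _ => let a := fresh "a" in let b := fresh "b" in destruct z as [a b]
  end.
Ltac calg := cdes; unfold Csub, Cadd, Copp, Cmul, C0 in *; simpl in *; f_equal; ring.

Lemma Cnorm_nonneg z : 0 <= Cnorm z.
Proof. unfold Cnorm; apply sqrt_positivity; nra. Qed.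

Lemma Cnorm_sq z : Cnorm z * Cnorm z = fst z * fst z + snd z * snd z.
Proof. unfold Cnorm; apply sqrt_sqrt; nra. Qed.

Lemma Cnorm_mul z w : Cnorm (Cmul z w) = Cnorm z * Cnorm w.
Proof.
  unfold Cnorm, Cmul; simpl. rewrite <- sqrt_mult by nra. f_equal. ring.
Qed.

Lemma Cnorm_C0 : Cnorm C0 = 0.
Proof. unfold Cnorm, C0; simpl. replace (0*0+0*0) with 0 by ring. apply sqrt_0. Qed.

Lemma Cnorm_eq0 z : Cnorm z = 0 -> z = C0.
Proof.
  intro H. assert (H2 := Cnorm_sq z). rewrite H in H2. destruct z as [a b]; simpl in *.
  unfold C0. f_equal; nra.
Qed.

Lemma Cnorm_le_iff z c : 0 <= c -> fst z * fst z + snd z * snd z <= c * c -> Cnorm z <= c.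
Proof.
  intros Hc H. destruct (Rle_lt_dec (Cnorm z) c) as [h|h]; auto.
  assert (Cnorm z * Cnorm z > c * c) by nra. rewrite Cnorm_sq in H0. lra.
Qed.

Lemma Cnorm_add z w : Cnorm (Cadd z w) <= Cnorm z + Cnorm w.
Proof.
  apply Cnorm_le_iff. pose proof (Cnorm_nonneg z); pose proof (Cnorm_nonneg w); lra.
  pose proof (Cnorm_sq z); pose proof (Cnorm_sq w).
  pose proof (Cnorm_nonneg z); pose proof (Cnorm_nonneg w).
  destruct z as [a b]; destruct w as [c d]; simpl in *.
  assert (a*c+b*d <= Cnorm (a,b) * Cnorm (c,d)).
  { assert (0 <= Cnorm (a,b) * Cnorm (c,d)) by (apply Rmult_le_pos; auto).
    destruct (Rle_lt_dec (a*c+b*d) 0). lra.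
    assert ((a*c+b*d)*(a*c+b*d) <= (Cnorm (a,b) * Cnorm (c,d))*(Cnorm (a,b) * Cnorm (c,d))).
    { replace ((Cnorm (a,b) * Cnorm (c,d))*(Cnorm (a,b) * Cnorm (c,d))) with
        ((Cnorm (a,b) * Cnorm (a,b))*(Cnorm (c,d) * Cnorm (c,d))) by ring.
      rewrite H, H0. pose proof (Rle_0_sqr (a*d-b*c)); unfold Rsqr in *; nra. }
    set (u := Cnorm (a,b) * Cnorm (c,d)) in *. destruct (Rle_lt_dec (a*c+b*d) u); auto. nra. }
  nra.
Qed.

Lemma Cnorm_opp z : Cnorm (Copp z) = Cnorm z.
Proof. unfold Cnorm, Copp; simpl. f_equal; ring. Qed.

Lemma Cnorm_sub z w : Cnorm (Csub z w) <= Cnorm z + Cnorm w.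
Proof. unfold Csub. rewrite <- (Cnorm_opp w). apply Cnorm_add. Qed.

Lemma Cnorm_sub_sym z w : Cnorm (Csub z w) = Cnorm (Csub w z).
Proof. unfold Cnorm, Csub, Cadd, Copp; simpl. f_equal; ring. Qed.

Lemma Cnorm_fst z : Rabs (fst z) <= Cnorm z.
Proof.
  pose proof (Cnorm_sq z); pose proof (Cnorm_nonneg z).
  apply Rsqr_incr_0_var. unfold Rsqr. rewrite <- Rabs_mult, Rabs_right by nra. nra. auto.
Qed.
Lemma Cnorm_snd z : Rabs (snd z) <= Cnorm z.
Proof.
  pose proof (Cnorm_sq z); pose proof (Cnorm_nonneg z).
  apply Rsqr_incr_0_var. unfold Rsqr. rewrite <- Rabs_mult, Rabs_right by nra. nra. auto.
Qed.
Lemma Cnorm_comp z : Cnorm z <= Rabs (fst z) + Rabs (snd z).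
Proof.
  apply Cnorm_le_iff. pose proof (Rabs_pos (fst z)); pose proof (Rabs_pos (snd z)); lra.
  pose proof (Rabs_pos (fst z)); pose proof (Rabs_pos (snd z)).
  assert (fst z * fst z = Rabs (fst z) * Rabs (fst z)) by (rewrite <- Rabs_mult; rewrite Rabs_right; nra).
  assert (snd z * snd z = Rabs (snd z) * Rabs (snd z)) by (rewrite <- Rabs_mult; rewrite Rabs_right; nra).
  nra.
Qed.

Definition C1 : CC := (1, 0).
Definition CR (r : R) : CC := (r, 0).
Lemma Cnorm_CR r : Cnorm (CR r) = Rabs r.
Proof. unfold Cnorm, CR; simpl. replace (r*r+0*0) with (Rsqr r) by (unfold Rsqr; ring). apply sqrt_Rsqr_abs. Qed.

Lemma Cnorm_pow z n : Cnorm (Cpow z n) = Cnorm z ^ n.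
Proof.
  induction n; simpl. replace (1,0) with (CR 1) by auto. rewrite Cnorm_CR. apply Rabs_R1.
  rewrite Cnorm_mul, IHn. auto.
Qed.

Definition Cinv (z : CC) : CC :=
  (fst z / (fst z * fst z + snd z * snd z), - snd z / (fst z * fst z + snd z * snd z)).

Lemma Cinv_r z : z <> C0 -> Cmul z (Cinv z) = C1.
Proof.
  intro H. assert (fst z * fst z + snd z * snd z <> 0).
  { intro E. apply H. destruct z as [a b]; simpl in *; unfold C0; f_equal; nra. }
  destruct z as [a b]; simpl in *. unfold Cmul, Cinv, C1; simpl. f_equal; field; auto.
Qed.

Lemma Cnorm_pos z : z <> C0 -> 0 < Cnorm z.
Proof. intro H. destruct (Cnorm_nonneg z); auto. symmetry in H0. apply Cnorm_eq0 in H0. tauto. Qed.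

Lemma Cnorm_inv z : z <> C0 -> Cnorm (Cinv z) = / Cnorm z.
Proof.
  intro H. pose proof (Cinv_r z H). assert (Cnorm z * Cnorm (Cinv z) = 1).
  { rewrite <- Cnorm_mul, H0. replace C1 with (CR 1) by auto. rewrite Cnorm_CR. apply Rabs_R1. }
  pose proof (Cnorm_pos z H). field_simplify_eq; [lra| lra].
Qed.

Lemma Cmul_neq0 z w : z <> C0 -> w <> C0 -> Cmul z w <> C0.
Proof.
  intros H1 H2 E. apply Cnorm_pos in H1; apply Cnorm_pos in H2.
  assert (Cnorm (Cmul z w) = 0) by (rewrite E; apply Cnorm_C0). rewrite Cnorm_mul in H. nra.
Qed.

Lemma Cpow_neq0 z n : z <> C0 -> Cpow z n <> C0.
Proof.
  intro H. induction n; simpl. intro E; inversion E; lra. apply Cmul_neq0; auto.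
Qed.

Lemma CC_dec (z w : CC) : {z = w} + {z <> w}.
Proof.
  destruct z as [a b], w as [c d]. destruct (Req_EM_T a c), (Req_EM_T b d); subst; auto;
  right; intro E; inversion E; auto.
Qed.

Fixpoint peval (p : list CC) (z : CC) : CC :=
  match p with [] => C0 | c :: q => Cadd c (Cmul z (peval q z)) end.

Fixpoint padd (p q : list CC) : list CC :=
  match p, q with
  | [], _ => q
  | _, [] => p
  | a :: p', b :: q' => Cadd a b :: padd p' q'
  end.

Definition pscale (c : CC) (p : list CC) : list CC := map (Cmul c) p.

Fixpoint D (p : list CC) : list CC :=
  match p with
  | [] => []
  | c :: q => match q with [] => [] | _ => padd q (C0 :: D q) end
  end.

Fixpoint Dn (t : nat) (p : list CC) : list CC :=
  match t with O => p | S t' => Dn t' (D p) end.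

Fixpoint nrm (r : R) (p : list CC) : R :=
  match p with [] => 0 | c :: q => Cnorm c + r * nrm r q end.

Definition mulXa (a : CC) (p : list CC) : list CC := padd (C0 :: p) (pscale (Copp a) p).

Fixpoint mulpow (a : CC) (j : nat) (p : list CC) : list CC :=
  match j with O => p | S j' => mulXa a (mulpow a j' p) end.

Lemma peval_padd p q z : peval (padd p q) z = Cadd (peval p z) (peval q z).
Proof.
  revert q; induction p as [|a p IH]; intros [|b q]; simpl; try calg.
  rewrite IH. set (u := peval p z); set (v := peval q z). calg.
Qed.

Lemma peval_pscale c p z : peval (pscale c p) z = Cmul c (peval p z).
Proof.
  unfold pscale in *. induction p as [|a p IH]; simpl. calg. rewrite IH.
  set (u := peval p z). calg.
Qed.

Lemma peval_mulXa a p z : peval (mulXa a p) z = Cmul (Csub z a) (peval p z).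
Proof.
  unfold mulXa. rewrite peval_padd, peval_pscale. simpl. set (u := peval p z). calg.
Qed.

Lemma peval_mulpow a j p z : peval (mulpow a j p) z = Cmul (Cpow (Csub z a) j) (peval p z).
Proof.
  induction j; simpl. set (u := peval p z); calg.
  rewrite peval_mulXa, IHj. set (u := peval p z); set (w := Cpow (Csub z a) j). calg.
Qed.

Lemma peval_D_cons c q z : peval (D (c :: q)) z = Cadd (peval q z) (Cmul z (peval (D q) z)).
Proof.
  simpl. destruct q as [|b q]. simpl. calg.
  rewrite peval_padd. simpl. calg.
Qed.

Lemma Dn_S t p : Dn (S t) p = D (Dn t p).
Proof. revert p; induction t; intro p; simpl; auto. rewrite <- IHt. auto. Qed.

Lemma nrm_nonneg r p : 0 <= r -> 0 <= nrm r p.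
Proof.
  intro Hr; induction p; simpl. lra. pose proof (Cnorm_nonneg a). nra.
Qed.

Lemma peval_bound r p w : Cnorm w <= r -> Cnorm (peval p w) <= nrm r p.
Proof.
  intro Hw. assert (0 <= r) by (pose proof (Cnorm_nonneg w); lra).
  induction p as [|c q IH]; simpl. rewrite Cnorm_C0; lra.
  eapply Rle_trans. apply Cnorm_add. rewrite Cnorm_mul.
  pose proof (Cnorm_nonneg w); pose proof (Cnorm_nonneg (peval q w)).
  pose proof (nrm_nonneg r q H). nra.
Qed.

Lemma poly_diff_bound r p z h : Cnorm z + 1 <= r -> Cnorm h <= 1 ->
  Cnorm (Csub (peval p (Cadd z h)) (peval p z)) <= Cnorm h * nrm r p.
Proof.
  intros Hz Hh. assert (0 <= r) by (pose proof (Cnorm_nonneg z); lra).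
  induction p as [|c q IH]; simpl.
  - replace (Csub C0 C0) with C0 by calg. rewrite Cnorm_C0. lra.
  - replace (Csub (Cadd c (Cmul (Cadd z h) (peval q (Cadd z h)))) (Cadd c (Cmul z (peval q z))))
      with (Cadd (Cmul z (Csub (peval q (Cadd z h)) (peval q z))) (Cmul h (peval q (Cadd z h))))
      by (set (u := peval q (Cadd z h)); set (v := peval q z); calg).
    eapply Rle_trans. apply Cnorm_add. rewrite !Cnorm_mul.
    assert (Cnorm (peval q (Cadd z h)) <= nrm r q).
    { apply peval_bound. eapply Rle_trans. apply Cnorm_add. lra. }
    pose proof (Cnorm_nonneg z); pose proof (Cnorm_nonneg h); pose proof (Cnorm_nonneg c).
    pose proof (nrm_nonneg r q H).
    assert (Cnorm z * Cnorm (Csub (peval q (Cadd z h)) (peval q z)) <= Cnorm z * (Cnorm h * nrm r q))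
      by (apply Rmult_le_compat_l; auto).
    assert (Cnorm h * Cnorm (peval q (Cadd z h)) <= Cnorm h * nrm r q) by (apply Rmult_le_compat_l; auto).
    assert (Cnorm h * nrm r q * (Cnorm z + 1) <= Cnorm h * nrm r q * r) by (apply Rmult_le_compat_l; nra).
    assert (0 <= Cnorm h * Cnorm c) by nra.
    nra.
Qed.

Lemma poly_taylor_bound r p z h : Cnorm z + 1 <= r -> Cnorm h <= 1 ->
  Cnorm (Csub (Csub (peval p (Cadd z h)) (peval p z)) (Cmul (peval (D p) z) h))
    <= (Cnorm h * Cnorm h) * nrm r p.
Proof.
  intros Hz Hh. assert (0 <= r) by (pose proof (Cnorm_nonneg z); lra).
  induction p as [|c q IH].
  - simpl. replace (Csub (Csub C0 C0) (Cmul C0 h)) with C0 by calg. rewrite Cnorm_C0. lra.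
  - rewrite peval_D_cons. simpl.
    replace (Csub (Csub (Cadd c (Cmul (Cadd z h) (peval q (Cadd z h)))) (Cadd c (Cmul z (peval q z))))
                  (Cmul (Cadd (peval q z) (Cmul z (peval (D q) z))) h))
      with (Cadd (Cmul z (Csub (Csub (peval q (Cadd z h)) (peval q z)) (Cmul (peval (D q) z) h)))
                 (Cmul h (Csub (peval q (Cadd z h)) (peval q z))))
      by (set (u := peval q (Cadd z h)); set (v := peval q z); set (w := peval (D q) z); calg).
    eapply Rle_trans. apply Cnorm_add. rewrite !Cnorm_mul.
    pose proof (poly_diff_bound r q z h Hz Hh).
    pose proof (Cnorm_nonneg z); pose proof (Cnorm_nonneg h); pose proof (Cnorm_nonneg c).
    pose proof (nrm_nonneg r q H).
    assert (Cnorm z * Cnorm (Csub (Csub (peval q (Cadd z h)) (peval q z)) (Cmul (peval (D q) z) h))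
       <= Cnorm z * (Cnorm h * Cnorm h * nrm r q)) by (apply Rmult_le_compat_l; auto).
    assert (Cnorm h * Cnorm (Csub (peval q (Cadd z h)) (peval q z)) <= Cnorm h * (Cnorm h * nrm r q))
      by (apply Rmult_le_compat_l; auto).
    assert (0 <= Cnorm h * Cnorm h) by nra.
    assert (Cnorm h * Cnorm h * nrm r q * (Cnorm z + 1) <= Cnorm h * Cnorm h * nrm r q * r) by (apply Rmult_le_compat_l; nra).
    assert (0 <= Cnorm h * Cnorm h * Cnorm c) by nra.
    nra.
Qed.

Lemma deriv_poly p : is_complex_derivative (peval p) (peval (D p)).
Proof.
  intros z eps Heps.
  set (r := Cnorm z + 1). set (N := nrm r p).
  assert (0 <= N) by (apply nrm_nonneg; unfold r; pose proof (Cnorm_nonneg z); lra).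
  exists (Rmin 1 (eps / (N + 1))). split.
  { apply Rmin_pos. lra. apply Rdiv_lt_0_compat; lra. }
  intros h Hh.
  assert (H1 : Cnorm h <= 1) by (pose proof (Rmin_l 1 (eps/(N+1))); lra).
  assert (H2 : Cnorm h <= eps / (N+1)) by (pose proof (Rmin_r 1 (eps/(N+1))); lra).
  eapply Rle_trans. apply (poly_taylor_bound r); auto. unfold r; lra.
  fold N. pose proof (Cnorm_nonneg h).
  assert (Cnorm h * (N + 1) <= eps).
  { apply (Rmult_le_compat_r (N+1)) in H2; [|lra]. unfold Rdiv in H2.
    rewrite Rmult_assoc, Rinv_l in H2 by lra. lra. }
  nra.
Qed.

Lemma deriv_unique f g1 g2 : is_complex_derivative f g1 -> is_complex_derivative f g2 ->
  forall z, g1 z = g2 z.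
Proof.
  intros H1 H2 z. destruct (CC_dec (Csub (g1 z) (g2 z)) C0) as [E|E].
  { destruct (g1 z), (g2 z); unfold Csub, Cadd, Copp, C0 in E; simpl in E; inversion E; f_equal; lra. }
  set (d := Cnorm (Csub (g1 z) (g2 z))). assert (Hd : 0 < d) by (apply Cnorm_pos; auto).
  destruct (H1 z (d/4)) as [d1 [Hd1 K1]]. lra.
  destruct (H2 z (d/4)) as [d2 [Hd2 K2]]. lra.
  set (t := Rmin d1 d2 / 2). assert (Ht : 0 < t) by (unfold t; apply Rdiv_lt_0_compat; [apply Rmin_pos|]; lra).
  set (h := CR t).
  assert (Hh : Cnorm h = t) by (unfold h; rewrite Cnorm_CR; apply Rabs_right; lra).
  assert (Hlt1 : Cnorm h < d1) by (rewrite Hh; unfold t; pose proof (Rmin_l d1 d2); lra).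
  assert (Hlt2 : Cnorm h < d2) by (rewrite Hh; unfold t; pose proof (Rmin_r d1 d2); lra).
  specialize (K1 h Hlt1); specialize (K2 h Hlt2).
  assert (Cmul (Csub (g1 z) (g2 z)) h =
     Csub (Csub (Csub (f (Cadd z h)) (f z)) (Cmul (g2 z) h))
          (Csub (Csub (f (Cadd z h)) (f z)) (Cmul (g1 z) h))).
  { set (u := f (Cadd z h)); set (v := f z); set (a := g1 z); set (b := g2 z). calg. }
  assert (Cnorm (Cmul (Csub (g1 z) (g2 z)) h) <= d/4 * Cnorm h + d/4 * Cnorm h).
  { rewrite H. eapply Rle_trans. apply Cnorm_sub. lra. }
  rewrite Cnorm_mul in H0. fold d in H0. rewrite Hh in H0. nra.
Qed.

Lemma deriv_ext f1 f2 g : (forall z, f1 z = f2 z) -> is_complex_derivative f1 g -> is_complex_derivative f2 g.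
Proof.
  intros E H z eps He. destruct (H z eps He) as [d [Hd K]]. exists d; split; auto.
  intros h Hh. rewrite <- !E. auto.
Qed.

Lemma deriv_add f g f' g' : is_complex_derivative f f' -> is_complex_derivative g g' ->
  is_complex_derivative (fun z => Cadd (f z) (g z)) (fun z => Cadd (f' z) (g' z)).
Proof.
  intros H1 H2 z eps He.
  destruct (H1 z (eps/2)) as [d1 [Hd1 K1]]. lra.
  destruct (H2 z (eps/2)) as [d2 [Hd2 K2]]. lra.
  exists (Rmin d1 d2); split. apply Rmin_pos; auto.
  intros h Hh. pose proof (Rmin_l d1 d2); pose proof (Rmin_r d1 d2).
  specialize (K1 h ltac:(lra)); specialize (K2 h ltac:(lra)).
  replace (Csub (Csub (Cadd (f (Cadd z h)) (g (Cadd z h))) (Cadd (f z) (g z))) (Cmul (Cadd (f' z) (g' z)) h))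
    with (Cadd (Csub (Csub (f (Cadd z h)) (f z)) (Cmul (f' z) h)) (Csub (Csub (g (Cadd z h)) (g z)) (Cmul (g' z) h))).
  eapply Rle_trans. apply Cnorm_add. lra.
  set (a := f (Cadd z h)); set (b := g (Cadd z h)); set (c := f z); set (dd := g z); set (u := f' z); set (v := g' z).
  calg.
Qed.

Lemma deriv_scale c f f' : is_complex_derivative f f' ->
  is_complex_derivative (fun z => Cmul c (f z)) (fun z => Cmul c (f' z)).
Proof.
  intros H z eps He.
  destruct (H z (eps/(Cnorm c + 1))) as [d [Hd K]].
  { apply Rdiv_lt_0_compat; auto. pose proof (Cnorm_nonneg c); lra. }
  exists d; split; auto. intros h Hh. specialize (K h Hh).
  replace (Csub (Csub (Cmul c (f (Cadd z h))) (Cmul c (f z))) (Cmul (Cmul c (f' z)) h))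
    with (Cmul c (Csub (Csub (f (Cadd z h)) (f z)) (Cmul (f' z) h)))
    by (set (a := f (Cadd z h)); set (b := f z); set (u := f' z); calg).
  rewrite Cnorm_mul. pose proof (Cnorm_nonneg c). pose proof (Cnorm_nonneg h).
  assert (Cnorm c * Cnorm (Csub (Csub (f (Cadd z h)) (f z)) (Cmul (f' z) h)) <= Cnorm c * (eps / (Cnorm c + 1) * Cnorm h))
    by (apply Rmult_le_compat_l; auto).
  assert (Cnorm c * (eps / (Cnorm c + 1)) <= eps).
  { unfold Rdiv. replace (Cnorm c * (eps * / (Cnorm c + 1))) with (eps * (Cnorm c / (Cnorm c + 1))) by (field; lra).
    assert (Cnorm c / (Cnorm c + 1) <= 1). { apply Rmult_le_reg_r with (Cnorm c + 1). lra.
      unfold Rdiv; rewrite Rmult_assoc, Rinv_l by lra. lra. }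
    nra. }
  nra.
Qed.

Lemma peval_D_padd p q z : peval (D (padd p q)) z = Cadd (peval (D p) z) (peval (D q) z).
Proof.
  apply (deriv_unique (peval (padd p q)) _ (fun z => Cadd (peval (D p) z) (peval (D q) z))). apply deriv_poly.
  apply deriv_ext with (f1 := fun z => Cadd (peval p z) (peval q z)).
  intro; symmetry; apply peval_padd. apply deriv_add; apply deriv_poly.
Qed.

Lemma peval_D_pscale c p z : peval (D (pscale c p)) z = Cmul c (peval (D p) z).
Proof.
  apply (deriv_unique (peval (pscale c p)) _ (fun z => Cmul c (peval (D p) z))). apply deriv_poly.
  apply deriv_ext with (f1 := fun z => Cmul c (peval p z)).
  intro; symmetry; apply peval_pscale. apply deriv_scale; apply deriv_poly.
Qed.

Lemma peval_D_mulXa a p z : peval (D (mulXa a p)) z = Cadd (peval p z) (Cmul (Csub z a) (peval (D p) z)).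
Proof.
  unfold mulXa. rewrite peval_D_padd, peval_D_pscale, peval_D_cons.
  set (u := peval p z); set (v := peval (D p) z). calg.
Qed.

Lemma D_ext p q : (forall z, peval p z = peval q z) -> forall z, peval (D p) z = peval (D q) z.
Proof.
  intros E. apply (deriv_unique (peval p)). apply deriv_poly.
  apply deriv_ext with (f1 := peval q). intro; symmetry; auto. apply deriv_poly.
Qed.

Lemma Dn_ext t : forall p q, (forall z, peval p z = peval q z) -> forall z, peval (Dn t p) z = peval (Dn t q) z.
Proof.
  induction t; intros p q E z; simpl; auto. apply IHt. apply D_ext; auto.
Qed.

Lemma D_mulpow a j : forall r, exists r'',
  (forall z, peval (D (mulpow a (S j) r)) z = peval (mulpow a j r'') z) /\
  peval r'' a = Cmul (CR (INR (S j))) (peval r a).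
Proof.
  induction j; intro r.
  - exists (padd r (mulXa a (D r))). split.
    + intro z. simpl. rewrite peval_D_mulXa, peval_padd, peval_mulXa. auto.
    + rewrite peval_padd, peval_mulXa. simpl. set (u := peval r a). set (v := peval (D r) a).
      unfold CR. simpl. calg.
  - destruct (IHj r) as [r2 [E2 V2]]. exists (padd r r2). split.
    + intro z. change (mulpow a (S (S j)) r) with (mulXa a (mulpow a (S j) r)).
      rewrite peval_D_mulXa, E2, !peval_mulpow, peval_padd. simpl.
      set (u := peval r z); set (v := peval r2 z); set (w := Cpow (Csub z a) j). calg.
    + rewrite peval_padd, V2. rewrite (S_INR (S j)). set (u := peval r a). unfold CR. calg.
Qed.

Lemma CR_neq0 n : CR (INR (S n)) <> C0.
Proof. unfold CR, C0. intro E. assert (H : INR (S n) = 0) by (change (fst (INR (S n), 0) = fst (0,0)); rewrite E; auto). revert H. apply not_0_INR. lia. Qed.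

Lemma Dn_mulpow a t : forall j r, exists r',
  (forall z, peval (Dn t (mulpow a (t + j) r)) z = peval (mulpow a j r') z) /\
  (peval r a <> C0 -> peval r' a <> C0).
Proof.
  induction t; intros j r.
  - exists r. split; auto.
  - destruct (D_mulpow a (t + j) r) as [r2 [E2 V2]].
    destruct (IHt j r2) as [r' [E' V']]. exists r'. split.
    + intro z. simpl. rewrite (Dn_ext t (D (mulpow a (S (t + j)) r)) (mulpow a (t + j) r2) E2). auto.
    + intro H. apply V'. rewrite V2. apply Cmul_neq0; auto. apply CR_neq0.
Qed.

Lemma vanish P a L R t : (forall z, peval P z = peval (mulpow a L R) z) -> (t < L)%nat ->
  peval (Dn t P) a = C0.
Proof.
  intros E Ht. rewrite (Dn_ext t P (mulpow a L R) E).
  replace L with (t + (L - t))%nat by lia.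
  destruct (Dn_mulpow a t (L - t) R) as [r' [E' _]]. rewrite E', peval_mulpow.
  destruct (L - t)%nat eqn:Hl. lia. simpl.
  replace (Csub a a) with C0 by calg. set (u := Cpow C0 n); set (v := peval r' a). calg.
Qed.

Lemma nonvanish a t R : peval R a <> C0 -> peval (Dn t (mulpow a t R)) a <> C0.
Proof.
  intro H. destruct (Dn_mulpow a t 0 R) as [r' [E' V']].
  replace (t + 0)%nat with t in E' by lia. rewrite E'. simpl.
  replace (Cmul (1, 0) (peval r' a)) with (peval r' a) by (set (u := peval r' a); calg). auto.
Qed.

Local Open Scope nat_scope.

Fixpoint T (d : nat) : nat := match d with 0 => 0 | S d' => T d' + S d' end.
Definition idx (s k : nat) : nat := T (s + k) + k.
Fixpoint cdec (n : nat) : nat * nat :=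
  match n with
  | 0 => (0, 0)
  | S n' => match cdec n' with (0, k) => (S k, 0) | (S s, k) => (s, S k) end
  end.

Lemma idx_cdec n : idx (fst (cdec n)) (snd (cdec n)) = n.
Proof.
  induction n; simpl; auto. destruct (cdec n) as [[|s] k]; simpl in *; unfold idx in *.
  - simpl. replace (k + 0) with k by lia. simpl in IHn. replace (k+0) with k by lia. lia.
  - replace (s + S k) with (S s + k) by lia. lia.
Qed.

Lemma cdec_T d : forall k, k <= d -> cdec (T d + k) = (d - k, k).
Proof.
  induction d; intros k Hk.
  - replace k with 0 by lia. auto.
  - induction k.
    + replace (T (S d) + 0) with (S (T d + d)) by (simpl; lia). simpl.
      rewrite IHd by lia. replace (d - d) with 0 by lia. auto.
    + replace (T (S d) + S k) with (S (T (S d) + k)) by lia. remember (T (S d) + k) as m.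
      change (cdec (S m)) with (match cdec m with (0, k) => (S k, 0) | (S s, k) => (s, S k) end).
      rewrite IHk by lia. destruct (S d - k) eqn:E. lia. f_equal; lia.
Qed.

Lemma cdec_idx s k : cdec (idx s k) = (s, k).
Proof. unfold idx. rewrite cdec_T by lia. f_equal; lia. Qed.

Lemma T_ge d : d <= T d.
Proof. induction d; simpl; lia. Qed.

Lemma s_le n : fst (cdec n) <= n.
Proof. rewrite <- (idx_cdec n) at 2. unfold idx. pose proof (T_ge (fst (cdec n) + snd (cdec n))). lia. Qed.

Lemma T_mono d d' : d' < d -> T d' < T d.
Proof. induction d; intro H. lia. simpl. destruct (Nat.eq_dec d' d). subst; lia. pose proof (IHd ltac:(lia)). lia. Qed.

Lemma idx_mono s s' k : s' < s -> idx s' k < idx s k.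
Proof. intro H. unfold idx. pose proof (T_mono (s + k) (s' + k) ltac:(lia)). lia. Qed.

Local Open Scope R_scope.

Definition sn (n : nat) : nat := fst (cdec n).
Definition pt (e : nat -> CC) (n : nat) : CC := e (snd (cdec n)).
Definition skipP (e : nat -> CC) (n : nat) : Prop :=
  exists m, (m < n)%nat /\ sn m = sn n /\ pt e m = pt e n.

Fixpoint Raux (e : nat -> CC) (m j : nat) : list CC :=
  match j with
  | O => [C1]
  | S j' => if CC_dec (pt e j') (pt e m) then Raux e m j' else mulpow (pt e j') (S m) (Raux e m j')
  end.

Definition Q (e : nat -> CC) (m : nat) : list CC := mulpow (pt e m) (sn m) (Raux e m m).

Lemma Raux_nz e m j : peval (Raux e m j) (pt e m) <> C0.
Proof.
  induction j; cbn [Raux].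
  - simpl. unfold C1, C0, Cadd, Cmul. intro E. apply (f_equal fst) in E. simpl in E. lra.
  - destruct (CC_dec (pt e j) (pt e m)); auto.
    rewrite peval_mulpow. apply Cmul_neq0; auto. apply Cpow_neq0.
    intro E. apply n. destruct (pt e m), (pt e j); unfold Csub, Cadd, Copp, C0 in E; simpl in E.
    inversion E. f_equal; lra.
Qed.

Lemma Raux_fact e m j : forall j', (j' < j)%nat -> pt e j' <> pt e m ->
  exists R, forall z, peval (Raux e m j) z = peval (mulpow (pt e j') (S m) R) z.
Proof.
  induction j; intros j' Hj Hne. lia.
  cbn [Raux]. destruct (Nat.eq_dec j' j) as [->|Hneq].
  - destruct (CC_dec (pt e j) (pt e m)). tauto. exists (Raux e m j). auto.
  - destruct (IHj j' ltac:(lia) Hne) as [R HR].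
    destruct (CC_dec (pt e j) (pt e m)).
    + exists R; auto.
    + exists (mulpow (pt e j) (S m) R). intro z. rewrite !peval_mulpow, HR, peval_mulpow.
      set (u := Cpow (Csub z (pt e j)) (S m)); set (v := Cpow (Csub z (pt e j')) (S m)); set (w := peval R z).
      calg.
Qed.

Lemma Q_nz e n : peval (Dn (sn n) (Q e n)) (pt e n) <> C0.
Proof. unfold Q. apply nonvanish. apply Raux_nz. Qed.

Lemma Q_vanish_other e n M : (n < M)%nat -> pt e n <> pt e M ->
  peval (Dn (sn n) (Q e M)) (pt e n) = C0.
Proof.
  intros H Hne. destruct (Raux_fact e M M n H Hne) as [R HR].
  apply (vanish _ _ (S M) (mulpow (pt e M) (sn M) R)).
  - intro z. unfold Q. rewrite !peval_mulpow, HR, peval_mulpow.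
    set (u := Cpow (Csub z (pt e M)) (sn M)); set (v := Cpow (Csub z (pt e n)) (S M)); set (w := peval R z).
    calg.
  - pose proof (s_le n). unfold sn. lia.
Qed.

Lemma Q_vanish_same e n M : (sn n < sn M)%nat -> pt e n = pt e M ->
  peval (Dn (sn n) (Q e M)) (pt e n) = C0.
Proof.
  intros H E. rewrite E. apply (vanish _ _ (sn M) (Raux e M M)); auto.
Qed.

Lemma later_zero_or_skip e n M : (n < M)%nat -> ~ skipP e M ->
  peval (Dn (sn n) (Q e M)) (pt e n) = C0.
Proof.
  intros H Hns. destruct (CC_dec (pt e n) (pt e M)) as [E|Ne].
  - apply Q_vanish_same; auto.
    destruct (Compare_dec.lt_eq_lt_dec (sn n) (sn M)) as [[Hl|Heq]|Hg]; auto.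
    + exfalso. apply Hns. exists n; auto.
    + exfalso. apply Hns. exists (idx (sn M) (snd (cdec n))).
      assert (Hc := cdec_idx (sn M) (snd (cdec n))).
      assert (idx (sn M) (snd (cdec n)) < idx (sn n) (snd (cdec n)))%nat by (apply idx_mono; auto).
      unfold sn in H0 at 2. rewrite idx_cdec in H0.
      split. lia. split.
      * unfold sn at 1. rewrite Hc. auto.
      * unfold pt at 1. rewrite Hc. simpl. rewrite <- E. auto.
  - apply Q_vanish_other; auto.
Qed.

Fixpoint psum (f : nat -> CC) (n : nat) : CC :=
  match n with O => C0 | S n' => Cadd (psum f n') (f n') end.
Fixpoint psumR (f : nat -> R) (n : nat) : R :=
  match n with O => 0 | S n' => psumR f n' + f n' end.

Lemma psum_ext f g n : (forall m, (m < n)%nat -> f m = g m) -> psum f n = psum g n.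
Proof. induction n; intro H; simpl; auto. rewrite IHn by (intros; apply H; lia). rewrite H by lia. auto. Qed.

Lemma psumR_nonneg f n : (forall m, 0 <= f m) -> 0 <= psumR f n.
Proof. intro H; induction n; simpl. lra. pose proof (H n); lra. Qed.

Lemma psumR_le_term f n m : (forall m, 0 <= f m) -> (m < n)%nat -> f m <= psumR f n.
Proof.
  intros H Hm; induction n. lia. simpl. destruct (Nat.eq_dec m n) as [->|Hne].
  pose proof (psumR_nonneg f n H); lra. pose proof (IHn ltac:(lia)). pose proof (H n). lra.
Qed.

Definition Bn e n : R := psumR (fun t => nrm (INR n + 1) (Dn t (Q e n))) (S n).
Definition vcur e (prev : nat -> CC) n : CC :=
  psum (fun m => Cmul (prev m) (peval (Dn (sn n) (Q e m)) (pt e n))) n.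
Definition qv e n : CC := peval (Dn (sn n) (Q e n)) (pt e n).

Definition spec (A : CC -> Prop) e n prev (eps : CC) : Prop :=
  Cnorm eps * Bn e n <= (/2)^n /\ (skipP e n -> eps = C0) /\
  (~ skipP e n -> A (Cadd (vcur e prev n) (Cmul eps (qv e n))) /\ Cadd (vcur e prev n) (Cmul eps (qv e n)) <> C0).

Lemma INR_pos1 n : 0 < INR n + 1.
Proof. pose proof (pos_INR n); lra. Qed.

Lemma Bn_nonneg e n : 0 <= Bn e n.
Proof. apply psumR_nonneg. intro; apply nrm_nonneg. pose proof (INR_pos1 n); lra. Qed.

Lemma pow_half_pos n : 0 < (/2)^n.
Proof. apply pow_lt. lra. Qed.

Lemma spec_ex (A : CC -> Prop) e (Hd : dense_set A) n prev : exists eps, spec A e n prev eps.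
Proof.
  destruct (classic (skipP e n)) as [Hs|Hs].
  - exists C0. split; [|split]; auto. rewrite Cnorm_C0. pose proof (pow_half_pos n); lra. tauto.
  - set (v := vcur e prev n). set (q := qv e n).
    assert (Hq : q <> C0) by apply Q_nz.
    pose proof (Cnorm_pos q Hq) as Hqp. pose proof (Bn_nonneg e n) as HB. pose proof (pow_half_pos n).
    set (del := (/2)^n / (Bn e n + 1) * Cnorm q).
    assert (Hdel : 0 < del) by (unfold del; apply Rmult_lt_0_compat; auto; apply Rdiv_lt_0_compat; lra).
    set (w := if CC_dec v C0 then CR (del/2) else v).
    assert (Hw : w <> C0 /\ Cnorm (Csub w v) <= del/2).
    { unfold w. destruct (CC_dec v C0) as [E|E].
      - split. unfold CR, C0. intro X. apply (f_equal fst) in X; simpl in X; lra.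
        rewrite E. replace (Csub (CR (del/2)) C0) with (CR (del/2)) by (unfold CR; calg).
        rewrite Cnorm_CR, Rabs_right; lra.
      - split; auto. replace (Csub v v) with C0 by calg. rewrite Cnorm_C0; lra. }
    destruct Hw as [Hw0 Hwv]. pose proof (Cnorm_pos w Hw0).
    destruct (Hd w (Rmin (del/2) (Cnorm w))) as [b [Hb Hbw]]. apply Rmin_pos; lra.
    pose proof (Rmin_l (del/2) (Cnorm w)); pose proof (Rmin_r (del/2) (Cnorm w)).
    assert (Hb0 : b <> C0).
    { intro E. rewrite E in Hbw. replace (Csub C0 w) with (Copp w) in Hbw by calg. rewrite Cnorm_opp in Hbw. lra. }
    assert (Hbv : Cnorm (Csub b v) < del).
    { replace (Csub b v) with (Cadd (Csub b w) (Csub w v)) by calg.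
      eapply Rle_lt_trans. apply Cnorm_add. lra. }
    exists (Cmul (Csub b v) (Cinv q)).
    assert (Hval : Cadd v (Cmul (Cmul (Csub b v) (Cinv q)) q) = b).
    { pose proof (Cinv_r q Hq). set (iq := Cinv q) in *.
      replace (Cadd v (Cmul (Cmul (Csub b v) iq) q)) with (Cadd v (Cmul (Csub b v) (Cmul q iq))) by calg.
      rewrite H3. unfold C1. calg. }
    split; [|split].
    + rewrite Cnorm_mul, Cnorm_inv by auto.
      assert (Cnorm (Csub b v) * / Cnorm q < (/2)^n / (Bn e n + 1)).
      { apply Rmult_lt_reg_r with (Cnorm q); auto. rewrite Rmult_assoc, Rinv_l by lra. unfold del in Hbv. lra. }
      assert ((/2)^n / (Bn e n + 1) * Bn e n <= (/2)^n).
      { unfold Rdiv. rewrite Rmult_assoc. assert (/ (Bn e n + 1) * Bn e n <= 1).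
        { apply Rmult_le_reg_l with (Bn e n + 1). lra. rewrite <- Rmult_assoc, Rinv_r by lra. lra. }
        nra. }
      assert (0 <= Cnorm (Csub b v) * / Cnorm q).
      { apply Rmult_le_pos. apply Cnorm_nonneg. left; apply Rinv_0_lt_compat; auto. }
      nra.
    + tauto.
    + intros _. fold v q. rewrite Hval. auto.
Qed.

Definition choose A e Hd n prev : CC :=
  proj1_sig (constructive_indefinite_description _ (spec_ex A e Hd n prev)).

Fixpoint pref A e Hd (n : nat) : nat -> CC :=
  match n with
  | O => fun _ => C0
  | S n' => fun m => if Nat.eqb m n' then choose A e Hd n' (pref A e Hd n') else pref A e Hd n' m
  end.

Definition epsq A e Hd (m : nat) : CC := pref A e Hd (S m) m.

Lemma pref_eps A e Hd n m : (m < n)%nat -> pref A e Hd n m = epsq A e Hd m.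
Proof.
  induction n; intro H. lia. simpl. destruct (Nat.eqb_spec m n) as [->|Hne].
  - unfold epsq. simpl. rewrite Nat.eqb_refl. auto.
  - apply IHn. lia.
Qed.

Lemma eps_spec A e Hd n : spec A e n (fun m => epsq A e Hd m) (epsq A e Hd n).
Proof.
  assert (E : epsq A e Hd n = choose A e Hd n (pref A e Hd n)).
  { unfold epsq. simpl. rewrite Nat.eqb_refl. auto. }
  assert (V : vcur e (pref A e Hd n) n = vcur e (fun m => epsq A e Hd m) n).
  { unfold vcur. apply psum_ext. intros m Hm. rewrite pref_eps; auto. }
  pose proof (proj2_sig (constructive_indefinite_description _ (spec_ex A e Hd n (pref A e Hd n)))) as S.
  fold (choose A e Hd n (pref A e Hd n)) in S. rewrite <- E in S. unfold spec in *. rewrite <- V. auto.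
Qed.

Lemma half_pow_S m : (/2)^(S m) = (/2)^m / 2.
Proof. simpl. field. Qed.

Lemma tele u N : (forall m, (N <= m)%nat -> Rabs (u (S m) - u m) <= (/2)^m) ->
  forall k m, (N <= m)%nat -> Rabs (u (m + k)%nat - u m) <= 2*(/2)^m - 2*(/2)^(m+k).
Proof.
  intros H k; induction k; intros m Hm.
  - replace (m + 0)%nat with m by lia. replace (u m - u m) with 0 by ring. rewrite Rabs_R0. lra.
  - replace (m + S k)%nat with (S (m + k)) by lia.
    replace (u (S (m + k)) - u m) with ((u (S (m+k)) - u (m+k)%nat) + (u (m+k)%nat - u m)) by ring.
    eapply Rle_trans. apply Rabs_triang. pose proof (H (m+k)%nat ltac:(lia)). pose proof (IHk m Hm).
    rewrite half_pow_S. lra.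
Qed.

Lemma small_pow eps : 0 < eps -> exists N, forall n, (n >= N)%nat -> (/2)^n < eps.
Proof.
  intro He. destruct (pow_lt_1_zero (/2)) with (y := eps) as [N HN]; auto.
  rewrite Rabs_right; lra. exists N. intros n Hn. specialize (HN n Hn).
  rewrite Rabs_right in HN; auto. left; apply pow_lt; lra.
Qed.

Lemma geo_conv u N : (forall m, (N <= m)%nat -> Rabs (u (S m) - u m) <= (/2)^m) ->
  exists l, Un_cv u l.
Proof.
  intro H. assert (Cauchy_crit u).
  { intros eps He. destruct (small_pow (eps/4)) as [N1 HN1]. lra.
    exists (Nat.max N N1). intros n m Hn Hm. unfold Rdist.
    set (K := Nat.max N N1).
    pose proof (tele u N H (n - K) K ltac:(lia)). pose proof (tele u N H (m - K) K ltac:(lia)).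
    replace (K + (n - K))%nat with n in H0 by lia. replace (K + (m - K))%nat with m in H1 by lia.
    pose proof (HN1 K ltac:(lia)).
    pose proof (pow_lt (/2) n ltac:(lra)). pose proof (pow_lt (/2) m ltac:(lra)).
    replace (u n - u m) with ((u n - u K) - (u m - u K)) by ring.
    eapply Rle_lt_trans. apply Rabs_triang. rewrite Rabs_Ropp.
    replace (K + (n - K))%nat with n by lia. replace (K + (m - K))%nat with m by lia. lra. }
  destruct (R_complete u H0) as [l Hl]. eauto.
Qed.

Definition Rlim (u : nat -> R) : R :=
  match excluded_middle_informative (exists l, Un_cv u l) with
  | left H => proj1_sig (constructive_indefinite_description _ H)
  | right _ => 0
  end.

Lemma Rlim_spec u : (exists l, Un_cv u l) -> Un_cv u (Rlim u).
Proof.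
  intro H. unfold Rlim. destruct (excluded_middle_informative (exists l, Un_cv u l)); [|tauto].
  apply (proj2_sig (constructive_indefinite_description _ e)).
Qed.

Lemma cv_const c : Un_cv (fun _ => c) c.
Proof. intros eps He. exists O. intros. unfold Rdist. replace (c - c) with 0 by ring. rewrite Rabs_R0; lra. Qed.

Lemma cv_eventually u l c N : Un_cv u l -> (forall M, (N <= M)%nat -> u M = c) -> l = c.
Proof.
  intros H E. apply (UL_sequence u); auto. intros eps He. exists N. intros n Hn.
  rewrite E by lia. unfold Rdist. replace (c - c) with 0 by ring. rewrite Rabs_R0; lra.
Qed.

Lemma exists_nat_ge x : exists n, x <= INR n.
Proof.
  destruct (archimed (Rabs x)) as [H _].
  assert (0 <= IZR (up (Rabs x))) by (pose proof (Rabs_pos x); lra).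
  apply le_IZR in H0. exists (Z.to_nat (up (Rabs x))).
  rewrite INR_IZR_INZ, Z2Nat.id by lia. pose proof (Rle_abs x). lra.
Qed.

Definition term e (ep : nat -> CC) s z m : CC := Cmul (ep m) (peval (Dn s (Q e m)) z).
Definition PS e ep s z M : CC := psum (term e ep s z) M.
Definition Fv e ep s z : CC :=
  (Rlim (fun M => fst (PS e ep s z M)), Rlim (fun M => snd (PS e ep s z M))).

Definition epsbound e (ep : nat -> CC) : Prop := forall n, Cnorm (ep n) * Bn e n <= (/2)^n.

Lemma nrm_le_Bn e s n : (s <= n)%nat -> nrm (INR n + 1) (Dn s (Q e n)) <= Bn e n.
Proof.
  intro H. unfold Bn. apply (psumR_le_term (fun t => nrm (INR n + 1) (Dn t (Q e n)))).
  intro; apply nrm_nonneg; pose proof (INR_pos1 n); lra. lia.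
Qed.

Lemma term_bound e ep s z m : epsbound e ep -> (s <= m)%nat -> Cnorm z <= INR m + 1 ->
  Cnorm (term e ep s z m) <= (/2)^m.
Proof.
  intros Hb Hs Hz. unfold term. rewrite Cnorm_mul.
  pose proof (peval_bound _ (Dn s (Q e m)) z Hz). pose proof (nrm_le_Bn e s m Hs).
  pose proof (Cnorm_nonneg (ep m)). pose proof (Cnorm_nonneg (peval (Dn s (Q e m)) z)).
  specialize (Hb m).
  assert (Cnorm (ep m) * Cnorm (peval (Dn s (Q e m)) z) <= Cnorm (ep m) * Bn e m)
    by (apply Rmult_le_compat_l; lra).
  lra.
Qed.

Lemma PS_conv e ep s z : epsbound e ep ->
  Un_cv (fun M => fst (PS e ep s z M)) (fst (Fv e ep s z)) /\
  Un_cv (fun M => snd (PS e ep s z M)) (snd (Fv e ep s z)).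
Proof.
  intro Hb. destruct (exists_nat_ge (Cnorm z)) as [N0 HN0].
  assert (Ht : forall m, (Nat.max s N0 <= m)%nat -> Cnorm (term e ep s z m) <= (/2)^m).
  { intros m Hm. apply term_bound; auto. lia.
    assert (INR N0 <= INR m) by (apply le_INR; lia). lra. }
  split; unfold Fv; simpl; apply Rlim_spec; apply (geo_conv _ (Nat.max s N0)); intros m Hm;
    unfold PS; cbn [psum Cadd fst snd]; specialize (Ht m Hm).
  - replace (fst (psum (term e ep s z) m) + fst (term e ep s z m) - fst (psum (term e ep s z) m))
      with (fst (term e ep s z m)) by ring. pose proof (Cnorm_fst (term e ep s z m)). lra.
  - replace (snd (psum (term e ep s z) m) + snd (term e ep s z m) - snd (psum (term e ep s z) m))
      with (snd (term e ep s z m)) by ring. pose proof (Cnorm_snd (term e ep s z m)). lra.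
Qed.

Lemma lim_norm_le (w : nat -> CC) W c :
  Un_cv (fun M => fst (w M)) (fst W) -> Un_cv (fun M => snd (w M)) (snd W) ->
  (forall M, Cnorm (w M) <= c) -> Cnorm W <= c.
Proof.
  intros H1 H2 H. assert (Hc : 0 <= c) by (pose proof (H O); pose proof (Cnorm_nonneg (w O)); lra).
  apply Cnorm_le_iff; auto.
  apply Rle_cv_lim with (Un := fun M => fst (w M) * fst (w M) + snd (w M) * snd (w M)) (Vn := fun _ => c * c).
  - intro M. rewrite <- Cnorm_sq. pose proof (H M). pose proof (Cnorm_nonneg (w M)). nra.
  - apply CV_plus; apply CV_mult; auto.
  - apply cv_const.
Qed.

Definition Et (p : list CC) z h : CC := Csub (Csub (peval p (Cadd z h)) (peval p z)) (Cmul (peval (D p) z) h).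

Lemma E_psum e ep s z h M :
  Csub (Csub (PS e ep s (Cadd z h) M) (PS e ep s z M)) (Cmul (PS e ep (S s) z M) h)
  = psum (fun m => Cmul (ep m) (Et (Dn s (Q e m)) z h)) M.
Proof.
  induction M; unfold PS in *; simpl. calg.
  rewrite <- IHM. unfold term, Et. rewrite Dn_S.
  set (a := psum (term e ep s (Cadd z h)) M); set (b := psum (term e ep s z) M);
  set (c := psum (term e ep (S s) z) M); set (u := ep M);
  set (x := peval (Dn s (Q e M)) (Cadd z h)); set (y := peval (Dn s (Q e M)) z);
  set (w := peval (D (Dn s (Q e M))) z). calg.
Qed.

Lemma psum_norm f M : Cnorm (psum f M) <= psumR (fun m => Cnorm (f m)) M.
Proof.
  induction M; simpl. rewrite Cnorm_C0; lra. eapply Rle_trans. apply Cnorm_add. lra.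
Qed.

Lemma psumR_mono f g M : (forall m, f m <= g m) -> psumR f M <= psumR g M.
Proof. intro H; induction M; simpl. lra. pose proof (H M); lra. Qed.

Lemma half_pow_le1 n : (/2)^n <= 1.
Proof. induction n; simpl. lra. pose proof (pow_lt (/2) n ltac:(lra)). lra. Qed.

Lemma psumR_le_N b M N : (forall m, 0 <= b m) -> (M <= N)%nat -> psumR b M <= psumR b N.
Proof.
  intros H Hle. induction Hle. lra. simpl. pose proof (H m). lra.
Qed.

Lemma psumR_tail b N0 : (forall m, 0 <= b m) -> (forall m, (N0 <= m)%nat -> b m <= (/2)^m) ->
  forall M, psumR b M <= psumR b N0 + 2.
Proof.
  intros H0 H M.
  assert (K : forall k, psumR b (N0 + k) <= psumR b N0 + 2 - 2 * (/2)^(N0 + k)).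
  { induction k.
    - replace (N0 + 0)%nat with N0 by lia. pose proof (half_pow_le1 N0). lra.
    - replace (N0 + S k)%nat with (S (N0 + k)) by lia. simpl psumR.
      pose proof (H (N0 + k)%nat ltac:(lia)). rewrite half_pow_S. lra. }
  destruct (Compare_dec.le_lt_dec N0 M).
  - replace M with (N0 + (M - N0))%nat by lia. pose proof (K (M - N0)%nat).
    pose proof (pow_lt (/2) (N0 + (M - N0)) ltac:(lra)). lra.
  - pose proof (psumR_le_N b M N0 H0 ltac:(lia)). lra.
Qed.

Lemma psumR_scale c b M : psumR (fun m => c * b m) M = c * psumR b M.
Proof. induction M; simpl. ring. rewrite IHM; ring. Qed.

Lemma Fv_deriv e ep s : epsbound e ep -> is_complex_derivative (Fv e ep s) (Fv e ep (S s)).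
Proof.
  intros Hb z eps He.
  destruct (exists_nat_ge (Cnorm z)) as [N0 HN0]. set (N1 := Nat.max s N0).
  set (b := fun m => Cnorm (ep m) * nrm (Rmax (Cnorm z + 1) (INR m + 1)) (Dn s (Q e m))).
  assert (Hb0 : forall m, 0 <= b m).
  { intro m. unfold b. apply Rmult_le_pos. apply Cnorm_nonneg. apply nrm_nonneg.
    pose proof (Rmax_l (Cnorm z + 1) (INR m + 1)); pose proof (Cnorm_nonneg z); lra. }
  assert (Hbt : forall m, (N1 <= m)%nat -> b m <= (/2)^m).
  { intros m Hm. unfold b. rewrite Rmax_right.
    - pose proof (nrm_le_Bn e s m ltac:(lia)). specialize (Hb m).
      assert (Cnorm (ep m) * nrm (INR m + 1) (Dn s (Q e m)) <= Cnorm (ep m) * Bn e m)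
        by (apply Rmult_le_compat_l; auto; apply Cnorm_nonneg). lra.
    - assert (INR N0 <= INR m) by (apply le_INR; lia). lra. }
  set (K := psumR b N1 + 2).
  assert (HK : 0 <= K) by (unfold K; pose proof (psumR_nonneg b N1 Hb0); lra).
  exists (Rmin 1 (eps / (K + 1))). split.
  { apply Rmin_pos. lra. apply Rdiv_lt_0_compat; lra. }
  intros h Hh.
  assert (H1 : Cnorm h <= 1) by (pose proof (Rmin_l 1 (eps/(K+1))); lra).
  assert (H2 : Cnorm h <= eps / (K+1)) by (pose proof (Rmin_r 1 (eps/(K+1))); lra).
  set (w := fun M => Csub (Csub (PS e ep s (Cadd z h) M) (PS e ep s z M)) (Cmul (PS e ep (S s) z M) h)).
  assert (Hw : forall M, Cnorm (w M) <= Cnorm h * Cnorm h * K).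
  { intro M. unfold w. rewrite E_psum. eapply Rle_trans. apply psum_norm.
    eapply Rle_trans. apply psumR_mono with (g := fun m => Cnorm h * Cnorm h * b m).
    - intro m. rewrite Cnorm_mul. unfold b.
      pose proof (poly_taylor_bound (Rmax (Cnorm z + 1) (INR m + 1)) (Dn s (Q e m)) z h (Rmax_l _ _) H1).
      fold (Et (Dn s (Q e m)) z h) in H.
      pose proof (Cnorm_nonneg (ep m)).
      assert (Cnorm (ep m) * Cnorm (Et (Dn s (Q e m)) z h) <=
              Cnorm (ep m) * (Cnorm h * Cnorm h * nrm (Rmax (Cnorm z + 1) (INR m + 1)) (Dn s (Q e m))))
        by (apply Rmult_le_compat_l; auto). lra.
    - rewrite psumR_scale. pose proof (psumR_tail b N1 Hb0 Hbt M).
      apply Rmult_le_compat_l. pose proof (Cnorm_nonneg h); nra. unfold K; lra. }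
  destruct (PS_conv e ep s (Cadd z h) Hb) as [A1 B1].
  destruct (PS_conv e ep s z Hb) as [A2 B2].
  destruct (PS_conv e ep (S s) z Hb) as [A3 B3].
  assert (Cnorm (Csub (Csub (Fv e ep s (Cadd z h)) (Fv e ep s z)) (Cmul (Fv e ep (S s) z) h)) <= Cnorm h * Cnorm h * K).
  { apply (lim_norm_le w); auto.
    - unfold w; simpl. apply CV_plus. apply CV_plus; auto. apply CV_opp; auto.
      apply CV_opp. apply CV_plus. apply CV_mult; auto. apply cv_const.
      apply CV_opp. apply CV_mult; auto. apply cv_const.
    - unfold w; simpl. apply CV_plus. apply CV_plus; auto. apply CV_opp; auto.
      apply CV_opp. apply CV_plus. apply CV_mult; auto. apply cv_const.
      apply CV_mult; auto. apply cv_const. }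
  pose proof (Cnorm_nonneg h).
  assert (Cnorm h * K <= eps).
  { apply (Rmult_le_compat_r (K+1)) in H2; [|lra]. unfold Rdiv in H2.
    rewrite Rmult_assoc, Rinv_l in H2 by lra. nra. }
  nra.
Qed.

Lemma Fv_value e ep n : epsbound e ep -> (forall M, skipP e M -> ep M = C0) -> ~ skipP e n ->
  Fv e ep (sn n) (pt e n) = Cadd (vcur e ep n) (Cmul (ep n) (qv e n)).
Proof.
  intros Hb Hz Hns. set (bv := Cadd (vcur e ep n) (Cmul (ep n) (qv e n))).
  assert (E : forall M, (S n <= M)%nat -> PS e ep (sn n) (pt e n) M = bv).
  { intros M HM. induction HM.
    - unfold PS. simpl. reflexivity.
    - unfold PS in *. simpl. rewrite IHHM. unfold term.
      destruct (classic (skipP e m)) as [Hs|Hs].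
      + rewrite (Hz m Hs). set (u := peval (Dn (sn n) (Q e m)) (pt e n)). calg.
      + rewrite later_zero_or_skip by (auto; lia). calg. }
  destruct (PS_conv e ep (sn n) (pt e n) Hb) as [A1 B1].
  pose proof (cv_eventually _ _ (fst bv) (S n) A1 ltac:(intros M HM; cbv beta; rewrite (E M HM); auto)).
  pose proof (cv_eventually _ _ (snd bv) (S n) B1 ltac:(intros M HM; cbv beta; rewrite (E M HM); auto)).
  destruct (Fv e ep (sn n) (pt e n)); destruct bv; simpl in *; subst; auto.
Qed.

Lemma psum_shift f n : psum f (S n) = Cadd (f O) (psum (fun k => f (S k)) n).
Proof.
  induction n. simpl. set (u := f O); calg.
  change (psum f (S (S n))) with (Cadd (psum f (S n)) (f (S n))). rewrite IHn. simpl.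
  set (u := f O); set (v := psum (fun k => f (S k)) n); set (w := f (S n)). calg.
Qed.

Lemma psum_mul c f n : Cmul c (psum f n) = psum (fun k => Cmul c (f k)) n.
Proof. induction n; simpl. calg. rewrite <- IHn. set (u := psum f n); set (v := f n). calg. Qed.

Lemma peval_seq (c : nat -> CC) z len : forall a,
  peval (map c (seq a len)) z = psum (fun k => Cmul (c (a + k)%nat) (Cpow z k)) len.
Proof.
  induction len; intro a. simpl. auto.
  rewrite psum_shift. simpl. rewrite IHlen, psum_mul. apply (f_equal2 Cadd).
  - replace (a + 0)%nat with a by lia. set (u := c a); calg.
  - apply psum_ext. intros m _. replace (a + S m)%nat with (S a + m)%nat by lia.
    set (u := c (S a + m)%nat); set (v := Cpow z m). calg.
Qed.

Lemma Csum_psum g n : Csum g n = psum g (S n).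
Proof. induction n; simpl. set (u := g O); calg. rewrite IHn. auto. Qed.

Lemma length_padd p q : length (padd p q) = Nat.max (length p) (length q).
Proof. revert q; induction p; intros [|b q]; simpl; auto. Qed.

Lemma length_D p : length (D p) = pred (length p).
Proof.
  induction p as [|c q IH]; simpl; auto. destruct q as [|b q]; simpl; auto.
  rewrite length_padd. simpl in *. rewrite IH. simpl. lia.
Qed.

Lemma Dn_len t : forall p, (length p <= t)%nat -> Dn t p = [].
Proof.
  induction t; intros p H; simpl. destruct p; simpl in *; auto; lia.
  apply IHt. rewrite length_D. lia.
Qed.

Theorem corollary2 (A : CC -> Prop) :
  countable_set A -> dense_set A ->
  exists f : CC -> CC, transcendental_entire f /\
    exists F : nat -> (CC -> CC),
      F O = f /\
      (forall s : nat, is_complex_derivative (F s) (F (S s))) /\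
      (forall (s : nat) (a : CC), A a -> A (F s a)).
Proof.
  intros [e He] Hd.
  set (ep := fun m => epsq A e Hd m).
  assert (Hb : epsbound e ep) by (intro n; apply (eps_spec A e Hd n)).
  assert (Hz : forall M, skipP e M -> ep M = C0) by (intros M HM; apply (eps_spec A e Hd M); auto).
  set (F := Fv e ep).
  assert (Hval : forall n, A (F (sn n) (pt e n)) /\ F (sn n) (pt e n) <> C0).
  { intro n. induction n as [n IH] using (well_founded_induction Wf_nat.lt_wf).
    destruct (classic (skipP e n)) as [Hs|Hs].
    - destruct Hs as [m [Hm [Hs Hp]]]. rewrite <- Hs, <- Hp. apply IH; auto.
    - unfold F. rewrite Fv_value; auto. apply (eps_spec A e Hd n); auto. }
  assert (Hder : forall s, is_complex_derivative (F s) (F (S s))) by (intro s; apply Fv_deriv; auto).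
  exists (F O). split.
  - split. exists (F 1%nat). apply Hder.
    intros [n [c Hc]].
    set (l := map c (seq 0 (S n))).
    assert (Hl : forall t z, F t z = peval (Dn t l) z).
    { induction t; intro z.
      - change (Dn 0 l) with l. rewrite Hc, Csum_psum. unfold l. rewrite peval_seq. apply psum_ext. auto.
      - apply (deriv_unique (F t) (F (S t)) (peval (Dn (S t) l))). apply Hder.
        apply deriv_ext with (f1 := peval (Dn t l)). intro; symmetry; auto.
        rewrite Dn_S. apply deriv_poly. }
    destruct (Hval (idx (S n) 0)) as [_ Hnz].
    rewrite Hl in Hnz. apply Hnz.
    unfold sn. rewrite cdec_idx. cbn [fst]. rewrite Dn_len. auto.
    unfold l. rewrite length_map, length_seq. lia.
  - exists F. split; auto. split; auto.
    intros s a Ha. destruct (proj1 (He a) Ha) as [k Hk].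
    destruct (Hval (idx s k)) as [HA _].
    unfold sn, pt in HA. rewrite cdec_idx in HA. simpl in HA. rewrite Hk in HA. auto.
Qed.
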